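(* Let $G$ be a non-separable graph with subgraphs $G_1,G_2$ such that $V(G_1)\cap V(G_2)=\{u,v\}$ (two distinct vertices), $V(G_1)\cup V(G_2)=V(G)$, $E(G_1)\cap E(G_2)=\emptyset$ and $E(G_1)\cup E(G_2)=E(G)$. Then $$F(G,\lambda)=\frac{F(G_1+uv,\lambda)\,F(G_2+uv,\lambda)}{\lambda-1}+F(G_1,\lambda)F(G_2,\lambda).$$
   Context: Graphs are finite, undirected, possibly with loops and parallel edges. The flow polynomial $F(G,\lambda)$ is determined by: $F(G,\lambda)=1$ if $E(G)=\emptyset$; $F(G,\lambda)=0$ if $G$ has a bridge; multiplicative over disjoint unions; $F(G,\lambda)=(\lambda-1)F(G-e,\lambda)$ if $e$ is a loop; otherwise $F(G,\lambda)=F(G/e,\lambda)-F(G-e,\lambda)$ ($G/e$ = contraction of $e$). A graph is non-separable if it is connected, has no cut-vertex, and either has no loops or has exactly one vertex and one edge. $H+uv$ denotes the graph obtained from $H$ by adding a new edge joining $u$ and $v$. *)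

(* Defs.v *)
(* Finite multigraphs (loops and parallel edges allowed)
   with vertices labelled by nat: a vertex list and an edge list of
   endpoint pairs (each list entry is one edge; duplicates = parallel
   edges; (x,x) = loop). *)
From mathcomp Require Import all_boot all_order all_algebra.
Set Implicit Arguments. Unset Strict Implicit. Unset Printing Implicit Defensive.
Import GRing.Theory.
Local Open Scope ring_scope.

Definition edge := (nat * nat)%type.

Fixpoint reachn (k : nat) (es : seq edge) (S : seq nat) : seq nat :=
  match k with
  | 0 => S
  | k'.+1 => reachn k' es
      (undup (S ++ [seq e.2 | e <- es & e.1 \in S]
                ++ [seq e.1 | e <- es & e.2 \in S]))
  end.

(* x and y are joined by a path in the graph with edge list es
   (a path uses at most size es edges) *)
Definition connectedb (es : seq edge) (x y : nat) : bool :=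
  y \in reachn (size es) es [:: x].

Definition del_edge (i : nat) (es : seq edge) : seq edge :=
  take i es ++ drop i.+1 es.

(* a bridge: a non-loop edge whose endpoints are disconnected after its
   deletion (equivalently, whose deletion increases the number of
   components) *)
Definition is_bridge (es : seq edge) (i : nat) : bool :=
  (i < size es)%N &&
  let e := nth (0%N, 0%N) es i in
  (e.1 != e.2) && ~~ connectedb (del_edge i es) e.1 e.2.

Definition has_bridge (es : seq edge) : bool :=
  has (is_bridge es) (iota 0 (size es)).

Definition contract (e : edge) (es : seq edge) : seq edge :=
  let sub z := if z == e.2 then e.1 else z in
  [seq (sub f.1, sub f.2) | f <- es].

Fixpoint flow_aux (n : nat) (es : seq edge) : {poly int} :=
  match n with
  | 0 => 1
  | n'.+1 =>
    match es with
    | [::] => 1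
    | e :: es' =>
      if has_bridge es then 0
      else if e.1 == e.2 then ('X - 1) * flow_aux n' es'
      else flow_aux n' (contract e es') - flow_aux n' es'
    end
  end.

(* The flow polynomial F(G, lambda) of a graph with edge list es
   (it does not depend on isolated vertices). *)
Definition flowpoly (es : seq edge) : {poly int} := flow_aux (size es) es.

Definition wf_graph (vs : seq nat) (es : seq edge) : Prop :=
  forall e, e \in es -> e.1 \in vs /\ e.2 \in vs.

Definition graph_connected (vs : seq nat) (es : seq edge) : Prop :=
  vs != [::] /\ forall x y, x \in vs -> y \in vs -> connectedb es x y.

Definition del_vertex_edges (w : nat) (es : seq edge) : seq edge :=
  [seq e <- es | (e.1 != w) && (e.2 != w)].

Definition cut_vertex (vs : seq nat) (es : seq edge) (w : nat) : Prop :=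
  w \in vs /\ exists x y, [/\ x \in vs, y \in vs, x != w, y != w &
                            ~~ connectedb (del_vertex_edges w es) x y].

Definition has_loop (es : seq edge) : bool := has (fun e => e.1 == e.2) es.

Definition nonseparable (vs : seq nat) (es : seq edge) : Prop :=
  [/\ graph_connected vs es,
      (forall w, ~ cut_vertex vs es w) &
      ~~ has_loop es \/ (size (undup vs) = 1%N /\ size es = 1%N)].

(* Main.v *)
Require Import Defs.
From mathcomp Require Import all_boot all_order all_algebra.
From Stdlib Require Import FunctionalExtensionality.
From mathcomp Require Import ring.
Set Implicit Arguments. Unset Strict Implicit. Unset Printing Implicit Defensive.
Import GRing.Theory.
Local Open Scope ring_scope.

Section Reach.
Variable es : seq edge.
Definition step (T : seq nat) :=
  undup (T ++ [seq e.2 | e <- es & e.1 \in T] ++ [seq e.1 | e <- es & e.2 \in T]).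
Definition rclosed (T : seq nat) := all (fun f : edge => (f.1 \in T) == (f.2 \in T)) es.
Definition internal (T : seq nat) := count (fun f : edge => (f.1 \in T) && (f.2 \in T)) es.

Lemma reachnS k S : reachn k.+1 es S = reachn k es (step S).
Proof. by []. Qed.

Lemma step_sub T : {subset T <= step T}.
Proof. by move=> x xT; rewrite mem_undup mem_cat xT. Qed.

Lemma step_nb f T : f \in es -> (f.1 \in T -> f.2 \in step T) /\ (f.2 \in T -> f.1 \in step T).
Proof.
move=> fes; split=> H; rewrite mem_undup !mem_cat; apply/orP; right; apply/orP.
  by left; apply/mapP; exists f => //; rewrite mem_filter H.
by right; apply/mapP; exists f => //; rewrite mem_filter H.
Qed.

Lemma step_eqi T T' : T =i T' -> step T =i step T'.
Proof.
move=> E x; rewrite !mem_undup !mem_cat E.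
by rewrite (@eq_filter _ (fun e : edge => e.1 \in T) (fun e => e.1 \in T'))
  ?(@eq_filter _ (fun e : edge => e.2 \in T) (fun e => e.2 \in T')) // => e; rewrite E.
Qed.

Lemma step_closed T : rclosed T -> step T =i T.
Proof.
move=> /allP C x; apply/idP/idP; last exact: step_sub.
rewrite mem_undup !mem_cat => /orP [//|/orP [] /mapP [f]].
  by rewrite mem_filter => /andP [f1 fes] ->; rewrite -(eqP (C f fes)).
by rewrite mem_filter => /andP [f2 fes] ->; rewrite (eqP (C f fes)).
Qed.

Lemma reach_eqi k S S' : S =i S' -> reachn k es S =i reachn k es S'.
Proof.
elim: k S S' => [|k IH] S S' E //=; apply: IH; exact: step_eqi.
Qed.

Lemma reach_closed k S : rclosed S -> reachn k es S =i S.
Proof.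
elim: k S => [|k IH] S C x //=.
rewrite (reach_eqi k (step_closed C)); exact: IH.
Qed.

Lemma reach_sub k S : {subset S <= reachn k es S}.
Proof.
elim: k S => [|k IH] S x xS //=; apply: IH; exact: step_sub.
Qed.

Lemma rclosed_eqi T T' : T =i T' -> rclosed T = rclosed T'.
Proof. move=> E; apply: eq_all => f; by rewrite !E. Qed.

Lemma count_strict (a b : pred edge) (s : seq edge) :
  (forall f, a f -> b f) -> (exists2 f, f \in s & b f && ~~ a f) ->
  (count a s < count b s)%N.
Proof.
move=> ab; elim: s => [|g s IH] [f]; first by rewrite in_nil.
rewrite inE => /orP [/eqP ->|fs] bf /=.
  case/andP: bf => -> /negbTE -> /=; rewrite add0n add1n ltnS.
  by apply: sub_count => h; apply: ab.
rewrite -addnS; apply: leq_add; last by apply: IH; exists f.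
by case: (a g) (ab g) => // ->.
Qed.

Lemma internal_step T : ~~ rclosed T -> (internal T < internal (step T))%N.
Proof.
move=> /allPn [f fes nf]; apply: count_strict.
  by move=> g /andP [g1 g2]; rewrite !step_sub.
exists f => //; case: (step_nb T fes) => H1 H2.
case E1: (f.1 \in T); case E2: (f.2 \in T); rewrite E1 E2 in nf => //=.
  by rewrite step_sub // H1.
by rewrite H2 // step_sub.
Qed.

Lemma internal_mono T T' : {subset T <= T'} -> (internal T <= internal T')%N.
Proof.
by move=> sub; apply: sub_count => f /andP [a b]; rewrite !sub.
Qed.

Lemma reach_main k S : rclosed (reachn k es S) \/ (k + internal S <= internal (reachn k es S))%N.
Proof.
elim: k S => [|k IH] S /=; first by right.
case: (boolP (rclosed S)) => C.
  left; by rewrite (rclosed_eqi (reach_eqi k (step_closed C))) (rclosed_eqi (reach_closed k C)).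
case: (IH (step S)) => [->|H]; first by left.
right; apply: leq_trans H; rewrite addSn -addnS leq_add2l; exact: internal_step.
Qed.

Lemma reach_final S : rclosed (reachn (size es) es S).
Proof.
case: (reach_main (size es) S) => // H.
have H2 : internal (reachn (size es) es S) = size es.
  apply/eqP; rewrite eqn_leq count_size /=; apply: leq_trans H; exact: leq_addr.
apply/allP => f fes.
move: H2; rewrite /internal => /eqP; rewrite -all_count => /allP /(_ f fes) /andP [-> ->] //.
Qed.
End Reach.

Section Count.
Variable F : finFieldType.
Definition fn := nat -> F.
Definition fadd (a b : fn) : fn := fun w => a w + b w.
Definition fsc (c : F) (a : fn) : fn := fun w => c * a w.
Definition f0 : fn := fun _ => 0.
Definition dl (e : edge) : fn := fun w => (w == e.1)%:R - (w == e.2)%:R.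

Fixpoint cntg (s : seq edge) (acc : fn) (k : fn -> nat) : nat :=
  match s with
  | [::] => k acc
  | e :: s' => (\sum_(c : F | c != 0%R) cntg s' (fadd acc (fsc c (dl e))) k)%N
  end.

Lemma faddA a b c : fadd (fadd a b) c = fadd a (fadd b c).
Proof. by apply: functional_extensionality => w; rewrite /fadd addrA. Qed.
Lemma faddC a b : fadd a b = fadd b a.
Proof. by apply: functional_extensionality => w; rewrite /fadd addrC. Qed.
Lemma fadd0 a : fadd a f0 = a.
Proof. by apply: functional_extensionality => w; rewrite /fadd addr0. Qed.
Lemma fadd0l a : fadd f0 a = a.
Proof. by apply: functional_extensionality => w; rewrite /fadd add0r. Qed.

Lemma cntg_ext s acc k k' : (forall a, k a = k' a) -> cntg s acc k = cntg s acc k'.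
Proof.
elim: s acc => [|e s IH] acc H /=; first exact: H.
by apply: eq_bigr => c _; apply: IH.
Qed.

Lemma cntg_cat s1 s2 acc k :
  cntg (s1 ++ s2) acc k = cntg s1 acc (fun a => cntg s2 a k).
Proof.
elim: s1 acc => [|e s IH] acc //=; by apply: eq_bigr => c _; apply: IH.
Qed.

Lemma cntg_tr s acc d k :
  cntg s (fadd acc d) k = cntg s acc (fun b => k (fadd b d)).
Proof.
elim: s acc => [|e s IH] acc //=; apply: eq_bigr => c _.
by rewrite -IH faddA [fadd d _]faddC -faddA.
Qed.

Lemma cntg_sum (I : finType) (P : pred I) s acc (k : I -> fn -> nat) :
  cntg s acc (fun a => \sum_(i | P i) k i a)%N = (\sum_(i | P i) cntg s acc (k i))%N.
Proof.
elim: s acc => [|e s IH] acc //=.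
rewrite (eq_bigr (fun c => \sum_(i | P i) cntg s (fadd acc (fsc c (dl e))) (k i))%N).
  by rewrite exchange_big.
by move=> c _; apply: IH.
Qed.

Lemma cntg_mul s acc k (m : nat) :
  cntg s acc (fun a => k a * m)%N = (cntg s acc k * m)%N.
Proof.
elim: s acc => [|e s IH] acc //=.
rewrite big_distrl /=; apply: eq_bigr => c _; exact: IH.
Qed.

Lemma cntg_zero s acc : cntg s acc (fun _ => 0%N) = 0%N.
Proof. elim: s acc => [|e s IH] acc //=; exact: big1. Qed.

Lemma cntg_loc (G : fn -> Prop) s acc k k' :
  G f0 -> (forall g f c, f \in s -> G g -> G (fadd g (fsc c (dl f)))) ->
  (forall g, G g -> k (fadd acc g) = k' (fadd acc g)) ->
  cntg s acc k = cntg s acc k'.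
Proof.
move=> G0 GC.
elim: s acc GC => [|e s IH] acc GC H /=; first by rewrite -(fadd0 acc) H.
apply: eq_bigr => c _; apply: IH.
  by move=> g f c' fs; apply: GC; rewrite inE fs orbT.
move=> g Gg; rewrite faddA [fadd _ g]faddC; apply: H.
by apply: GC => //; rewrite mem_head.
Qed.

Lemma cntg_swap e1 e2 s acc k :
  cntg [:: e1, e2 & s] acc k = cntg [:: e2, e1 & s] acc k.
Proof.
rewrite /= exchange_big; apply: eq_bigr => c1 _; apply: eq_bigr => c2 _.
by rewrite !faddA [fadd (fsc c1 _) _]faddC.
Qed.

Lemma cntg_comm s1 s2 acc k :
  cntg s1 acc (fun a => cntg s2 a k) = cntg s2 acc (fun b => cntg s1 b k).
Proof.
elim: s1 acc => [|e s IH] acc /=; first by apply: cntg_ext.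
rewrite (eq_bigr (fun c => cntg s2 (fadd acc (fsc c (dl e))) (fun b => cntg s b k))); last first.
  by move=> c _; apply: IH.
rewrite cntg_sum; apply: eq_bigr => c _.
by rewrite cntg_tr.
Qed.

Lemma cntg_perm s t acc k : perm_eq s t -> cntg s acc k = cntg t acc k.
Proof.
move=> st; apply: (@catCA_perm_subst _ _ (fun s => cntg s acc k)) st => s1 s2 s3.
rewrite !cntg_cat.
rewrite (cntg_ext _ _ (fun a => cntg_cat s2 s3 a k)).
rewrite (cntg_ext _ _ (fun a => cntg_cat s1 s3 a k)).
exact: cntg_comm.
Qed.


Lemma cntg_scale s acc k c : c != 0 ->
  cntg s acc k = cntg s (fsc c acc) (fun a => k (fsc c^-1 a)).
Proof.
move=> cnz; elim: s acc => [|e s IH] acc /=.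
  congr k; apply: functional_extensionality => w; by rewrite /fsc mulrA mulVf // mul1r.
symmetry; rewrite (reindex_inj (mulfI cnz)) /=.
rewrite (eq_bigl (fun c' => c' != 0)); last by move=> c'; rewrite mulf_eq0 (negbTE cnz).
apply: eq_bigr => c' _; rewrite IH; congr cntg.
apply: functional_extensionality => w; by rewrite /fsc /fadd [RHS]mulrDr mulrA.
Qed.

Definition k0 (V : seq nat) (a : fn) : nat := all (fun w => a w == 0) V.

Lemma sum_nz_const (K : nat) : (\sum_(c : F | c != 0%R) K)%N = (#|F|.-1 * K)%N.
Proof.
rewrite -(cardC1 (0 : F)) -sum_nat_const; by apply: eq_bigl => c; rewrite !inE.
Qed.

Lemma sum_eq1 (y0 : F) : (\sum_(c : F) ((c == y0) : nat))%N = 1%N.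
Proof.
rewrite (bigD1 y0) //= eqxx big1 // => c /negbTE ->; done.
Qed.

Definition sub (x y z : nat) := if z == y then x else z.
Definition push (x y : nat) (a : fn) : fn :=
  fun w => if w == y then 0 else if w == x then a x + a y else a w.

Lemma push_lin x y a b c : push x y (fadd a (fsc c b)) = fadd (push x y a) (fsc c (push x y b)).
Proof.
apply: functional_extensionality => w; rewrite /push /fadd /fsc.
case: (w == y); first by rewrite mulr0 addr0.
case: (w == x) => //; rewrite mulrDr; by rewrite addrACA.
Qed.

Lemma push0 x y : push x y f0 = f0.
Proof.
apply: functional_extensionality => w; rewrite /push /f0.
by case: (w == y); case: (w == x); rewrite ?addr0.
Qed.

Lemma sub_ne x y z : x != y -> (y == sub x y z) = false.
Proof.
rewrite /sub => xy; case: (eqVneq z y) => [_|zy]; first by rewrite eq_sym (negbTE xy).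
by rewrite eq_sym (negbTE zy).
Qed.

Lemma push_dl x y f : x != y ->
  push x y (dl f) = dl (sub x y f.1, sub x y f.2).
Proof.
move=> xy; apply: functional_extensionality => w; rewrite /push /dl /=.
case: f => f1 f2 /=.
case: (eqVneq w y) => [->|wy]; first by rewrite !sub_ne // subrr.
rewrite /sub.
case: (eqVneq w x) => [->|wx].
  case: (eqVneq f1 y) => [->|f1y]; case: (eqVneq f2 y) => [->|f2y];
  rewrite ?eqxx ?[y == f1]eq_sym ?[y == f2]eq_sym ?(negbTE f1y) ?(negbTE f2y) ?[x == y](negbTE xy);
  by rewrite /= ?subrr ?subr0 ?sub0r ?addr0 ?add0r // addrC.
case: (eqVneq f1 y) => [->|f1y]; case: (eqVneq f2 y) => [->|f2y];
  by rewrite ?eqxx ?(negbTE wy) ?(negbTE wx) ?[w == y](negbTE wy) .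
Qed.






Lemma cntg_push x y s acc k : x != y ->
  cntg (contract (x, y) s) (push x y acc) k = cntg s acc (fun a => k (push x y a)).
Proof.
move=> xy; elim: s acc => [|f s IH] acc //=.
apply: eq_bigr => c _; rewrite -IH push_lin push_dl //.
Qed.

Definition cnt V s := cntg s f0 (k0 V).

Lemma k0_push x y V b c : x != y -> x \in V -> y \in V ->
  k0 V (fadd b (fsc c (dl (x, y)))) = ((c == b y) * k0 V (push x y b))%N.
Proof.
move=> xy xV yV; rewrite /k0 /fadd /fsc /dl /push /=.
have yx : y != x by rewrite eq_sym.
case: (eqVneq c (b y)) => [->|cb] /=.
  rewrite mul1n; congr nat_of_bool; apply: eq_all => w.
  case: (eqVneq w y) => [->|wy].
    by rewrite eqxx (negbTE yx) /= sub0r mulrN1 subrr eqxx.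
  rewrite ?(negbTE wy) /=.
  case: (eqVneq w x) => [->|wx] /=; first by rewrite subr0 mulr1.
  by rewrite subrr mulr0 addr0.
rewrite mul0n; case: allP => // /(_ y yV).
by rewrite eqxx (negbTE yx) /= sub0r mulrN1 subr_eq0 eq_sym (negbTE cb).
Qed.

Lemma fsc00 d : fadd f0 (fsc 0 d) = f0.
Proof. apply: functional_extensionality => w; by rewrite /fadd /fsc /f0 mul0r addr0. Qed.

Lemma cnt_dc x y s V : x != y -> x \in V -> y \in V ->
  (cnt V ((x, y) :: s) + cnt V s)%N = cnt V (contract (x, y) s).
Proof.
move=> xy xV yV; rewrite /cnt /= -[in RHS](push0 x y) cntg_push //.
rewrite -{2}(fsc00 (dl (x, y))).
rewrite addnC -(bigD1 (0 : F) (P := predT)) //=.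
rewrite (eq_bigr (fun c => cntg s f0 (fun b => k0 V (fadd b (fsc c (dl (x, y))))))); last first.
  by move=> c _; rewrite fadd0l -{1}(fadd0l (fsc c _)) cntg_tr.
rewrite -cntg_sum; apply: cntg_ext => b.
rewrite (eq_bigr (fun c => ((c == b y) * k0 V (push x y b))%N)); last first.
  by move=> c _; rewrite k0_push.
by rewrite -big_distrl /= sum_eq1 mul1n.
Qed.

Lemma cnt_loop x s V : cnt V ((x, x) :: s) = (#|F|.-1 * cnt V s)%N.
Proof.
rewrite /cnt /= -sum_nz_const; apply: eq_bigr => c _; congr cntg.
apply: functional_extensionality => w; by rewrite /fadd /fsc /f0 /dl /= subrr mulr0 addr0.
Qed.


Lemma sum_ind (S : seq nat) x : uniq S ->
  \sum_(w <- S) ((w == x)%:R : F) = (x \in S)%:R.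
Proof.
move=> uS; case: (boolP (x \in S)) => xS.
  rewrite (bigD1_seq x) //= eqxx big1 ?addr0 ?xS // => w /negbTE ->; done.
rewrite big1_seq // => w /andP [_ wS]; case: (eqVneq w x) => [ewx|] //.
by rewrite -ewx wS in xS.
Qed.

Definition wfV (V : seq nat) (es : seq edge) :=
  forall f, f \in es -> (f.1 \in V) && (f.2 \in V).

Lemma cnt_bridge V es : wfV V es -> has_bridge es -> cnt V es = 0%N.
Proof.
move=> wf /hasP [i _] /andP [ilt /andP [ne nc]].
set e := nth (0%N, 0%N) es i in ne nc.
set rest := del_edge i es in nc.
have Hes : es = take i es ++ e :: drop i.+1 es by rewrite -drop_nth // cat_take_drop.
set R := reachn (size rest) rest [:: e.1].
have Rcl := reach_final rest [:: e.1].
have e1R : e.1 \in R by apply: reach_sub; rewrite mem_head.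
have e2R : e.2 \notin R by [].
set S := [seq w <- undup V | w \in R].
have uS : uniq S by rewrite filter_uniq // undup_uniq.
have memS w : (w \in S) = (w \in V) && (w \in R) by rewrite mem_filter mem_undup andbC.
pose phi (a : fn) := \sum_(w <- S) a w.
have phiD a b : phi (fadd a b) = phi a + phi b by rewrite /phi big_split.
have phiZ c a : phi (fsc c a) = c * phi a by rewrite /phi mulr_sumr.
have phiDl f : phi (dl f) = (f.1 \in S)%:R - (f.2 \in S)%:R.
  by rewrite /phi /dl sumrB !sum_ind.
have esin f : f \in es -> (f.1 \in V) && (f.2 \in V) by move=> fe; apply: wf.
have restes f : f \in rest -> f \in es.
  by rewrite [in X in _ -> X]Hes /rest /del_edge !mem_cat inE => /orP [] ->; rewrite ?orbT.
have phirest f : f \in rest -> phi (dl f) = 0.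
  move=> fr; rewrite phiDl !memS; case/andP: (esin f (restes f fr)) => -> ->.
  by move/allP: Rcl => /(_ f fr) /eqP ->; rewrite subrr.
have phie : phi (dl e) = 1.
  have eV : (e.1 \in V) && (e.2 \in V) by apply: esin; rewrite Hes mem_cat mem_head orbT.
  by rewrite phiDl !memS; case/andP: eV => -> ->; rewrite e1R (negbTE e2R) subr0.
have k0phi a : k0 V a != 0%N -> phi a = 0.
  rewrite /k0; case: allP => // H _; rewrite /phi big1_seq // => w /andP [_ wS].
  by apply/eqP; apply: H; move: wS; rewrite memS => /andP [].
have G0 : phi f0 = 0 by rewrite /phi big1.
rewrite /cnt Hes cntg_cat /= -/rest.
rewrite (@cntg_loc (fun g => phi g = 0) _ _ _ (fun _ => 0%N)) ?cntg_zero //.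
  move=> g f c fin Gg; rewrite phiD phiZ Gg phirest ?mulr0 ?addr0 //.
  by rewrite /rest /del_edge mem_cat fin.
move=> g Gg; rewrite big1 // => c cnz.
rewrite (@cntg_loc (fun g => phi g = 0) _ _ _ (fun _ => 0%N)) ?cntg_zero //.
  move=> g' f c' fin Gg'; rewrite phiD phiZ Gg' phirest ?mulr0 ?addr0 //.
  by rewrite /rest /del_edge mem_cat fin orbT.
move=> g' Gg'; case: (eqVneq (k0 V (fadd (fadd (fadd f0 g) (fsc c (dl e))) g')) 0%N) => // /k0phi.
rewrite !phiD phiZ G0 Gg Gg' phie !add0r mulr1 addr0 => ec; by rewrite ec eqxx in cnz.
Qed.


Lemma wfV_contract V x y s : x \in V -> wfV V s -> wfV V (contract (x, y) s).
Proof.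
move=> xV wf f /mapP [g gs ->] /=; case/andP: (wf g gs) => g1 g2.
by rewrite /sub /=; case: ifP; case: ifP => _ _; rewrite ?xV ?g1 ?g2.
Qed.

Lemma flow_eval n es V : size es = n -> wfV V es ->
  (flow_aux n es).[(#|F|)%:Z] = (cnt V es)%:Z.
Proof.
elim: n es => [|n IH] [|[x y] es] //= sz wf.
  by clear wf; rewrite hornerC /cnt /= /k0 /f0; elim: V => //= w V ->; rewrite eqxx.
case: sz => sz.
have wf' : wfV V es by move=> f fe; apply: wf; rewrite inE fe orbT.
have /andP [xV yV] : (x \in V) && (y \in V) by apply: (wf (x, y)); rewrite mem_head.
case: ifP => Hb; first by rewrite horner0 cnt_bridge.
case: (eqVneq x y) => [<-|xy].
  rewrite hornerM hornerXsubC IH // cnt_loop PoszM.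
  have F0 : (0 < #|F|)%N by apply/card_gt0P; exists 0.
  by rewrite -subn1 -subzn // mulrC.
rewrite hornerD hornerN !IH ?size_map //; last exact: wfV_contract.
by rewrite -cnt_dc // PoszD addrK.
Qed.

Section Split.
Variables (V vs1 vs2 : seq nat) (u v : nat).
Hypothesis uv : u != v.
Hypothesis hI : forall x, (x \in vs1) && (x \in vs2) = (x == u) || (x == v).
Hypothesis hU : forall x, (x \in V) = (x \in vs1) || (x \in vs2).

Definition kb (al : F) (a : fn) : nat := all (fun w => a w == al * dl (u, v) w) V.
Definition Good (vs : seq nat) (g : fn) :=
  (forall w, w \notin vs -> g w = 0) /\ \sum_(w <- undup vs) g w = 0.

Lemma Good_closed vs s : wfV vs s -> forall g f c, f \in s -> Good vs g -> Good vs (fadd g (fsc c (dl f))).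
Proof.
move=> wf g f c fs [G1 G2]; case/andP: (wf f fs) => f1 f2; split.
  move=> w wn; rewrite /fadd /fsc /dl G1 //.
  case: (eqVneq w f.1) => [ew|]; first by rewrite ew f1 in wn.
  case: (eqVneq w f.2) => [ew|]; first by rewrite ew f2 in wn.
  by move=> _ _; rewrite subrr mulr0 addr0.
rewrite /fadd /fsc big_split /= G2 -mulr_sumr /dl sumrB !sum_ind ?undup_uniq //.
by rewrite !mem_undup f1 f2 subrr mulr0 addr0.
Qed.

Lemma Good0 vs : Good vs f0.
Proof. by split => //; rewrite big1. Qed.

Lemma uvin : [/\ u \in vs1, v \in vs1, u \in vs2 & v \in vs2].
Proof.
have := hI u; have := hI v; rewrite eqxx orbT /= => /andP [? ?].
by rewrite eqxx /= => /andP [? ?].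
Qed.

Lemma gform g b : Good vs1 g -> Good vs2 b -> all (fun w => b w + g w == 0) V ->
  forall w, w \in V -> g w = g u * dl (u, v) w.
Proof.
move=> [G1 G2] [B1 B2] /allP H.
have [u1 v1 u2 v2] := uvin.
have zero w : w != u -> w != v -> g w = 0.
  move=> wu wv; case: (boolP (w \in vs1)) => w1; last exact: G1.
  have w2 : w \notin vs2.
    apply/negP => w2; have := hI w; rewrite w1 w2 (negbTE wu) (negbTE wv) //.
  have := H w; rewrite hU w1 => /(_ isT) /eqP; rewrite B1 // add0r //.
have gv : g v = - g u.
  apply/eqP; rewrite -addr_eq0 addrC; apply/eqP; rewrite -G2.
  rewrite (eq_big_seq (fun w => g u * (w == u)%:R + g v * (w == v)%:R)); last first.
    move=> w _; case: (eqVneq w u) => [->|wu]; first by rewrite (negbTE uv) mulr1 mulr0 addr0.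
    case: (eqVneq w v) => [->|wv]; first by rewrite mulr0 mulr1 add0r.
    by rewrite zero // !mulr0 addr0.
  by rewrite big_split /= -!mulr_sumr !sum_ind ?undup_uniq // !mem_undup u1 v1 !mulr1.
move=> w _; rewrite /dl /=.
case: (eqVneq w u) => [->|wu]; first by rewrite (negbTE uv) subr0 mulr1.
case: (eqVneq w v) => [->|wv]; first by rewrite gv sub0r mulrN1.
by rewrite zero // subrr mulr0.
Qed.

Lemma pointwise g b : Good vs1 g -> Good vs2 b ->
  k0 V (fadd b g) = (\sum_(al : F) (kb (- al) b * kb al g))%N.
Proof.
move=> Gg Gb; have [u1 v1 u2 v2] := uvin.
have uV : u \in V by rewrite hU u1.
rewrite /k0 /fadd.
case: (boolP (all _ V)) => H.
  have gf := gform Gg Gb H.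
  rewrite (bigD1 (g u)) //= big1 ?addn0.
    have -> : kb (g u) g = 1%N.
      rewrite /kb; case: allP => // [[]] w wV; by rewrite gf.
    have -> : kb (- g u) b = 1%N.
      rewrite /kb; case: allP => // [[]] w wV.
      move/allP: H => /(_ w wV); rewrite addr_eq0 => /eqP ->; by rewrite gf // -mulNr.
    by [].
  move=> al ne; rewrite /kb; case: allP => _ //=.
  case: allP => // /(_ u uV) /eqP; rewrite /dl /= eqxx (negbTE uv) subr0 mulr1 => e.
  by rewrite e eqxx in ne.
rewrite big1 // => al _; rewrite /kb; case: allP => // Hb; case: allP => // Hg.
case/allP: H => w wV; rewrite (eqP (Hb w wV)) (eqP (Hg w wV)) mulNr addNr //.
Qed.

Lemma split_cnt es1 es2 : wfV vs1 es1 -> wfV vs2 es2 ->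
  cnt V (es1 ++ es2) =
  (\sum_(al : F) (cntg es1 f0 (kb al) * cntg es2 f0 (kb (- al))))%N.
Proof.
move=> w1 w2; rewrite /cnt cntg_cat.
rewrite (@cntg_loc (Good vs1) _ _ _
  (fun a => \sum_(al : F) (kb al a * cntg es2 f0 (kb (- al))))%N) ?cntg_sum.
- apply: eq_bigr => al _; by rewrite cntg_mul.
- exact: Good0.
- exact: Good_closed.
move=> g Gg; rewrite fadd0l -{1}(fadd0l g) cntg_tr.
rewrite (@cntg_loc (Good vs2) _ _ _
  (fun b => \sum_(al : F) (kb (- al) b * kb al g))%N) ?cntg_sum.
- apply: eq_bigr => al _; by rewrite cntg_mul mulnC.
- exact: Good0.
- exact: Good_closed.
move=> b Gb; rewrite fadd0l; exact: pointwise.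
Qed.


Lemma N_const s al : al != 0 -> cntg s f0 (kb al) = cntg s f0 (kb 1%R).
Proof.
move=> alnz; rewrite [RHS](@cntg_scale s f0 (kb 1%R) al alnz).
have -> : fsc al f0 = f0 by apply: functional_extensionality => w; rewrite /fsc /f0 mulr0.
apply: cntg_ext => a; rewrite /kb /fsc; congr nat_of_bool; apply: eq_all => w.
by rewrite mul1r (can2_eq (mulVKf alnz) (mulKf alnz)).
Qed.

Lemma cnt_N0 s : cnt V s = cntg s f0 (kb 0%R).
Proof.
apply: cntg_ext => a; rewrite /kb /k0; congr nat_of_bool; apply: eq_all => w.
by rewrite mul0r.
Qed.

Lemma cnt_uv s : cnt V ((u, v) :: s) = (#|F|.-1 * cntg s f0 (kb 1%R))%N.
Proof.
rewrite /cnt /= -sum_nz_const; apply: eq_bigr => c cnz.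
rewrite cntg_tr -(N_const s (al := - c)) ?oppr_eq0 //.
apply: cntg_ext => a; rewrite /kb /k0 /fadd /fsc; congr nat_of_bool; apply: eq_all => w.
by rewrite addr_eq0 mulNr.
Qed.

Lemma main_count es es1 es2 : wfV vs1 es1 -> wfV vs2 es2 -> perm_eq es (es1 ++ es2) ->
  (cnt V es * #|F|.-1 =
   cnt V ((u, v) :: es1) * cnt V ((u, v) :: es2) + #|F|.-1 * (cnt V es1 * cnt V es2))%N.
Proof.
move=> w1 w2 pe.
have -> : cnt V es = cnt V (es1 ++ es2) by apply: cntg_perm.
rewrite split_cnt // (bigD1 (0:F)) //= oppr0.
rewrite (eq_bigr (fun _ => cntg es1 f0 (kb 1%R) * cntg es2 f0 (kb 1%R))%N); last first.
  by move=> al alnz; rewrite !N_const ?oppr_eq0.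
rewrite sum_nz_const !cnt_uv !cnt_N0.
set q := #|F|.-1; set n0 := cntg es1 _ _; set n1 := cntg es1 _ _.
set m0 := cntg es2 _ _; set m1 := cntg es2 _ _.
ring.
Qed.
End Split.
End Count.

Fixpoint gp (k : nat) : nat :=
  match k with 0 => 2%N | k'.+1 => s2val (prime_above (gp k')) end.

Lemma gp_prime k : prime (gp k).
Proof. case: k => [|k] //=; exact: (s2valP' (prime_above (gp k))). Qed.

Lemma gp_lt k l : (k < l)%N -> (gp k < gp l)%N.
Proof.
elim: l => [|l IH] //; rewrite ltnS leq_eqVlt => /orP [/eqP ->|kl] /=.
  exact: (s2valP (prime_above (gp l))).
apply: ltn_trans (IH kl) _; exact: (s2valP (prime_above (gp l))).
Qed.

Lemma gp_inj : injective gp.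
Proof.
move=> k l E; case: (ltngtP k l) => // H; have := gp_lt H; by rewrite E ltnn.
Qed.

Lemma poly_primes (P : {poly int}) : (forall p, prime p -> P.[p%:Z] = 0) -> P = 0.
Proof.
move=> H; apply/eqP; apply: contraT => Pnz.
have := max_poly_roots (rs := [seq (gp k)%:Z | k <- iota 0 (size P)]) Pnz.
rewrite size_map size_iota ltnn; apply.
  by apply/allP => x /mapP [k _ ->]; apply/rootP; apply: H; exact: gp_prime.
rewrite map_inj_uniq ?iota_uniq // => k l [E]; exact: gp_inj.
Qed.

Theorem lemma2p6 (vs vs1 vs2 : seq nat) (es es1 es2 : seq edge) (u v : nat) :
  wf_graph vs es -> wf_graph vs1 es1 -> wf_graph vs2 es2 ->
  nonseparable vs es ->
  u != v ->
  (forall x, (x \in vs1) && (x \in vs2) = (x == u) || (x == v)) ->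
  (forall x, (x \in vs) = (x \in vs1) || (x \in vs2)) ->
  perm_eq es (es1 ++ es2) ->
  flowpoly es * ('X - 1) =
    flowpoly ((u, v) :: es1) * flowpoly ((u, v) :: es2)
    + ('X - 1) * (flowpoly es1 * flowpoly es2).
Proof.
move=> wg wg1 wg2 _ uv hI hU pe.
have tow V s : wf_graph V s -> wfV V s.
  by move=> w f fs; case: (w f fs) => -> ->.
have w1 := tow _ _ wg1; have w2 := tow _ _ wg2; have w := tow _ _ wg.
have u1 : u \in vs1 by have := hI u; rewrite eqxx /= => /andP [].
have u2 : u \in vs2 by have := hI u; rewrite eqxx /= => /andP [].
have v1 : v \in vs1 by have := hI v; rewrite eqxx orbT => /andP [].
have v2 : v \in vs2 by have := hI v; rewrite eqxx orbT => /andP [].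
have wV1 : wfV vs es1.
  by move=> f fs; case/andP: (w1 f fs) => a b; rewrite !hU a b.
have wV2 : wfV vs es2.
  by move=> f fs; case/andP: (w2 f fs) => a b; rewrite !hU a b !orbT.
have wA : wfV vs ((u, v) :: es1).
  by move=> f; rewrite inE => /orP [/eqP -> /=|]; [rewrite !hU u1 v1 | apply: wV1].
have wB : wfV vs ((u, v) :: es2).
  by move=> f; rewrite inE => /orP [/eqP -> /=|]; [rewrite !hU u1 v1 | apply: wV2].
apply/eqP; rewrite -subr_eq0; apply/eqP; apply: poly_primes => p pp.
have := main_count 'F_p uv hI hU w1 w2 pe.
rewrite card_Fp // => /(congr1 Posz); rewrite !PoszD !PoszM.
rewrite -subn1 -subzn ?prime_gt0 // => E.
rewrite /flowpoly !(hornerE, hornerD, hornerM, hornerN).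
rewrite -(card_Fp pp) !(flow_eval _ _ w) // !(flow_eval _ _ wA) // !(flow_eval _ _ wB) //.
rewrite !(flow_eval _ _ wV1) // !(flow_eval _ _ wV2) // card_Fp //.
by rewrite E !mulrA subrr.
Qed.
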